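(* Let $m$ be a positive integer and let $q\ge m+1$ be a prime power. Then there exists an (explicitly constructible) family $\{(A_i,S_i)\}_{i=1}^{2m}$, where each $A_i$ is an invertible $2^m\times 2^m$ matrix over $\mathbb{F}_q$ and each $S_i$ is a subspace of $\mathbb{F}_q^{2^m}$ of dimension $2^{m-1}$, which satisfies the subspace condition with $r=2$ and $\ell=2^m$.
   Context: Vectors are row vectors and matrices act on the right: for a subspace $S\subseteq\mathbb{F}_q^\ell$ and an $\ell\times\ell$ matrix $M$, $SM=\{sM: s\in S\}$; $U+V=\{u+v:u\in U,v\in V\}$. Let $r,\ell$ be integers with $r\mid\ell$. A family $\{(A_i,S_i)\}_{i=1}^k$, where each $A_i$ is an invertible $\ell\times\ell$ matrix over $\mathbb{F}_q$ and each $S_i$ is an $(\ell/r)$-dimensional subspace of $\mathbb{F}_q^\ell$, satisfies the subspace condition (for $r$ and $\ell$) if: (Independence) for every $i$, $S_i+S_iA_i+S_iA_i^2+\dots+S_iA_i^{r-1}=\mathbb{F}_q^\ell$; (Invariance) for all $i\ne j$, $S_iA_j=S_i$; (Nonsingularity) every square block submatrix (obtained by choosing $t$ block rows and $t$ block columns, for any $t$) of the $k\times r$ block matrix whose $(i,j)$ block is $A_i^{j}$, $i=1,\dots,k$, $j=0,\dots,r-1$ (with $A_i^0=I$), is invertible. *)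

(* Defs.v *)
From HB Require Import structures.
From mathcomp Require Import all_boot all_order all_algebra.
Set Implicit Arguments. Unset Strict Implicit. Unset Printing Implicit Defensive.
Import GRing.Theory.
Local Open Scope ring_scope.

(* Subspaces of F^l are represented as row spaces of l x l matrices (mxalgebra).
   S *m A is the matrix whose row space is SA = {sA : s in S}. *)

Definition block_submx (F : fieldType) (l k r t : nat)
  (A : 'I_k -> 'M[F]_l) (f : 'I_t -> 'I_k) (g : 'I_t -> 'I_r)
  : 'M[F]_(\sum_(a < t) l, \sum_(b < t) l) :=
  \mxblock_(a < t, b < t) (A (f a) ^+ (g b)).

Definition subspace_condition (F : fieldType) (r l k : nat)
  (A : 'I_k -> 'M[F]_l) (S : 'I_k -> 'M[F]_l) : Prop :=
  (r %| l)%N /\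
  (forall i, A i \in unitmx) /\
  (forall i, \rank (S i) = (l %/ r)%N) /\
  (forall i, (\sum_(j < r) (S i *m A i ^+ j) == 1%:M)%MS) /\
  (forall i j, i != j -> (S i *m A j == S i)%MS) /\
  (forall (t : nat) (f : 'I_t -> 'I_k) (g : 'I_t -> 'I_r),
     injective f -> injective g -> block_submx A f g \in unitmx).

(* Main.v *)
Require Import Defs.
From HB Require Import structures.
From mathcomp Require Import all_boot all_order all_algebra.
From mathcomp Require Import ring zify.
Set Implicit Arguments. Unset Strict Implicit. Unset Printing Implicit Defensive.
Import GRing.Theory.
Local Open Scope ring_scope.

Lemma sum_ord2 (V : zmodType) (G : 'I_2 -> V) :
  \sum_(j < 2) G j = G ord0 + G ord_max.
Proof. by rewrite big_ord_recl big_ord1; congr (_ + G _); apply: val_inj. Qed.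

Lemma ord2_cases (a : 'I_2) : a = ord0 \/ a = ord_max.
Proof. by case: a => -[|[|//]] ?; [left|right]; apply: val_inj. Qed.

Lemma blk_unit (F : fieldType) (l t : nat) (X Y : 'I_t -> 'I_t -> 'M[F]_l) :
  (forall a k, \sum_j (Y a j *m X j k) = if a == k then 1%:M else 0) ->
  \mxblock_(a < t, b < t) X a b \in unitmx.
Proof.
move=> H.
have E : \mxblock_(a < t, b < t) Y a b *m \mxblock_(a < t, b < t) X a b = 1%:M.
  rewrite mul_mxblock -(mxdiagZ (p_ := fun _ : 'I_t => l)) /mxdiag.
  apply: eq_mxblock => a k; rewrite H; case: eqP => // _.
  by rewrite conform_mx_id.
by case: (mulmx1_unit E).
Qed.

Lemma unit_nil (F : fieldType) n (c : F) (M : 'M[F]_n.+1) :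
  c != 0 -> M ^+ 3 = 0 -> c%:M + M \in unitmx.
Proof.
move=> c0 M3; pose u := c^-1.
have cu : c%:P * u%:P = 1 :> {poly F} by rewrite -polyCM mulfV.
have key : (c%:P + 'X) * (u%:P - u%:P * u%:P * 'X + u%:P * u%:P * u%:P * 'X^2)
   = 1 + u%:P * u%:P * u%:P * 'X^3 :> {poly F}.
  have -> : (c%:P + 'X) * (u%:P - u%:P * u%:P * 'X + u%:P * u%:P * u%:P * 'X^2)
     = (c%:P * u%:P - 1) * (1 - u%:P * 'X + u%:P * u%:P * 'X^2) + 1
       + u%:P * u%:P * u%:P * 'X^3 :> {poly F} by ring.
  by rewrite cu subrr mul0r add0r.
have E : (c%:M + M) *m horner_mx M (u%:P - u%:P * u%:P * 'X + u%:P * u%:P * u%:P * 'X^2)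
   = 1%:M.
  have -> : c%:M + M = horner_mx M (c%:P + 'X) by rewrite rmorphD /= horner_mx_C horner_mx_X.
  rewrite mulmxE -rmorphM key rmorphD rmorph1 rmorphM /= rmorphXn /= horner_mx_X M3 mulr0 addr0.
  by [].
by case: (mulmx1_unit E).
Qed.
Section PM.
Variables (F : fieldType) (T : finType) (n : nat) (e : 'I_n -> T) (e' : T -> 'I_n).
Hypotheses (ee' : cancel e e') (e'e : cancel e' e).

Definition pm (f : T -> option T) : 'M[F]_n :=
  \matrix_(i, j) (f (e i) == Some (e j))%:R.

Lemma pm_ext f g : f =1 g -> pm f = pm g.
Proof. by move=> fg; apply/matrixP => i j; rewrite !mxE fg. Qed.

Lemma pm_mul f g : pm f *m pm g = pm (fun t => obind g (f t)).
Proof.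
apply/matrixP => i k; rewrite !mxE.
case E: (f (e i)) => [t|] /=; last first.
  by rewrite big1 // => j _; rewrite !mxE E mul0r.
rewrite (bigD1 (e' t)) //= big1 ?addr0.
  by rewrite !mxE E e'e eqxx mul1r.
move=> j /negbTE nj; rewrite !mxE E.
case: eqP => [[tj]|]; last by rewrite mul0r.
by rewrite tj ee' eqxx in nj.
Qed.

Lemma pm0 : pm (fun _ => None) = 0.
Proof. by apply/matrixP => i j; rewrite !mxE. Qed.

Lemma pm_sum1 f g : (forall t, (f t == Some t) + (g t == Some t) = 1 /\
   forall u, u != t -> f t != Some u /\ g t != Some u)%N -> pm f + pm g = 1%:M.
Proof.
move=> H; apply/matrixP => i j; rewrite !mxE.
have [<-|nij] := eqVneq i j.
  by case: (H (e i)) => h1 _; rewrite -natrD h1.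
have nej : e j != e i by apply: contra nij => /eqP/(can_inj ee') ->.
case: (H (e i)) => _ /(_ _ nej) [/negbTE -> /negbTE ->].
by rewrite addr0.
Qed.
End PM.

Notation BT m := {ffun 'I_m -> bool}.
Section Bits.
Variable m : nat.
Definition flip (p : 'I_m) (t : BT m) : BT m := [ffun j => if j == p then ~~ t j else t j].

Arguments flip : simpl never.
Lemma flip_p p t : flip p t p = ~~ t p.
Proof. by rewrite ffunE eqxx. Qed.
Lemma flip_q p q t : q != p -> flip p t q = t q.
Proof. by rewrite ffunE => /negbTE ->. Qed.
Lemma flipK p : involutive (flip p).
Proof. by move=> t; apply/ffunP => j; rewrite !ffunE; case: eqP => // _; rewrite negbK. Qed.
Lemma flipC p q t : flip p (flip q t) = flip q (flip p t).
Proof. by apply/ffunP => j; rewrite !ffunE; do 2 case: eqP. Qed.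
Lemma flip_neq p t : flip p t != t.
Proof. by apply/eqP => /ffunP /(_ p); rewrite flip_p; case: (t p). Qed.

Definition nf (p : 'I_m) (b : bool) (t : BT m) : option (BT m) :=
  if t p == b then None else Some (flip p t).
End Bits.

Section Concrete.
Variables (F : fieldType) (m n : nat) (e : 'I_n -> BT m) (e' : BT m -> 'I_n).
Hypotheses (ee' : cancel e e') (e'e : cancel e' e).

Definition NN p b : 'M[F]_n := pm F e (nf p b).

Lemma NN_sq p b : NN p b *m NN p b = 0.
Proof.
rewrite /NN (pm_mul F ee' e'e) -(pm0 F e); apply: pm_ext => t.
rewrite /nf; case: eqP => //= /eqP h; rewrite flip_p.
by case: (t p) b h => -[].
Qed.

Lemma NN_anti p b : NN p b *m NN p (~~ b) + NN p (~~ b) *m NN p b = 1%:M.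
Proof.
rewrite /NN !(pm_mul F ee' e'e); apply: (pm_sum1 F ee') => t.
rewrite /nf; case: b; case E: (t p); rewrite /= ?flip_p ?E /= ?flipK;
  split; rewrite ?eqxx // => u ut; split => //; apply/eqP => -[] tu; by rewrite tu eqxx in ut.
Qed.

Lemma NN_comm p q b c : p != q -> NN p b *m NN q c = NN q c *m NN p b.
Proof.
move=> pq; have qp : q != p by rewrite eq_sym.
rewrite /NN !(pm_mul F ee' e'e); apply: pm_ext => t.
rewrite /nf; case E1: (t p == b); case E2: (t q == c);
  rewrite /= ?flip_q ?E1 ?E2 //= flipC //.
Qed.
End Concrete.
Section Abstract.
Variables (F : fieldType) (m n : nat) (lam : 'I_m -> F) (N : 'I_m -> bool -> 'M[F]_n.+1).
Hypotheses (lam_inj : injective lam) (lam0 : forall p, lam p != 0)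
  (Nsq : forall p b, N p b *m N p b = 0)
  (Nanti : forall p b, N p b *m N p (~~ b) + N p (~~ b) *m N p b = 1%:M)
  (Ncomm : forall p q b c, p != q -> N p b *m N q c = N q c *m N p b).

Lemma N3 p b : N p b ^+ 3 = 0.
Proof. by rewrite !exprS expr0 mulr1 -mulmxE Nsq mulmx0. Qed.

Lemma NNN p b : N p b *m N p (~~ b) *m N p b = N p b.
Proof.
have -> : N p b *m N p (~~ b) = 1%:M - N p (~~ b) *m N p b.
  by rewrite -(Nanti p b) addrK.
by rewrite mulmxBl mul1mx -mulmxA Nsq mulmx0 subr0.
Qed.

Lemma rankP p b : \rank (N p b *m N p (~~ b)) = (n.+1 %/ 2)%N.
Proof.
have h1 b' : (\rank (N p b') <= \rank (N p b' *m N p (~~ b')))%N.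
  by rewrite -{1}(NNN p b') mxrankM_maxl.
have h2 b' : (\rank (N p (~~ b') *m N p b') <= \rank (N p b'))%N by apply: mxrankM_maxr.
have := h1 b; have := h2 b; have := h1 (~~ b); have := h2 (~~ b); rewrite negbK.
have h3 := mxrank_add (N p b *m N p (~~ b)) (N p (~~ b) *m N p b).
rewrite Nanti mxrank1 in h3.
have h4 := mxrank_mul_min (N p b *m N p (~~ b)) (N p (~~ b) *m N p b).
have PQ : N p b *m N p (~~ b) *m (N p (~~ b) *m N p b) = 0.
  by rewrite mulmxA -(mulmxA (N p b)) Nsq mulmx0 mul0mx.
rewrite PQ mxrank0 in h4.
lia.
Qed.

Lemma pos_proof (i : 'I_(2 * m)) : ((if (i < m)%N then val i else (i - m)%N) < m)%N.
Proof. case: ifP => [//|/negbT h]; rewrite -leqNgt in h; have := ltn_ord i; lia. Qed.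

Definition pos (i : 'I_(2 * m)) : 'I_m := Ordinal (pos_proof i).
Definition sb (i : 'I_(2 * m)) : bool := (i < m)%N.

Lemma pos_sb_inj i j : pos i = pos j -> sb i = sb j -> i = j.
Proof.
move=> /(congr1 val) /=; rewrite /sb => h1 h2; apply: val_inj => /=.
move: h1 h2; have := ltn_ord i; have := ltn_ord j.
case: (ltnP i m); case: (ltnP j m) => //= *; lia.
Qed.

Definition AA i := (lam (pos i))%:M + N (pos i) (sb i).
Definition SS i := N (pos i) (sb i) *m N (pos i) (~~ sb i).

Lemma AA_unit i : AA i \in unitmx.
Proof. exact: unit_nil (lam0 _) (N3 _ _). Qed.

Lemma SA i : SS i *m AA i = lam (pos i) *: SS i + N (pos i) (sb i).
Proof. by rewrite /AA mulmxDr mul_mx_scalar /SS NNN. Qed.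

Lemma Ncube_diff p q b c : p != q -> (N p b - N q c) ^+ 3 = 0.
Proof.
move=> pq; set X := N p b; set Y := N q c.
have XX : X * X = 0 by apply: Nsq.
have YY : Y * Y = 0 by apply: Nsq.
have XY : X * Y = Y * X by apply: Ncomm.
have XYX : X * Y * X = 0 by rewrite XY -mulrA XX mulr0.
have XYY : X * Y * Y = 0 by rewrite -mulrA YY mulr0.
have YXX : Y * X * X = 0 by rewrite -mulrA XX mulr0.
have YXY : Y * X * Y = 0 by rewrite -XY -mulrA YY mulr0.
rewrite !exprSr expr0 mul1r !(mulrBl, mulrBr, mulrA, XX, YY, XYX, XYY, YXX, YXY, mulNr, mul0r, sub0r, subr0, oppr0, subrr).
by rewrite opprK addr0 YXY.
Qed.

Lemma diff_unit i j : i != j -> AA i - AA j \in unitmx.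
Proof.
move=> ij; rewrite /AA opprD addrACA -raddfB /=.
have [pq|pq] := eqVneq (pos i) (pos j); last first.
  apply: unit_nil; last exact: Ncube_diff.
  by rewrite subr_eq0; apply: contra pq => /eqP /lam_inj ->.
have sbj : sb j = ~~ sb i.
  case: (sb i) (sb j) (pos_sb_inj pq) ij => -[] // /(_ erefl) ->; by rewrite eqxx.
rewrite pq sbj subrr raddf0 add0r -pq.
set X := N (pos i) (sb i); set Y := N (pos i) (~~ sb i).
have E : (X - Y) *m (- (X - Y)) = 1%:M.
  rewrite mulmxN mulmxBl !mulmxBr /X /Y Nsq.
  have := Nsq (pos i) (~~ sb i); rewrite -/Y => ->.
  by rewrite -(Nanti (pos i) (sb i)) -/X -/Y sub0r subr0 opprB opprK addrC.
by case: (mulmx1_unit E).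
Qed.

Lemma indep i : (\sum_(j < 2) (SS i *m AA i ^+ j) == 1%:M)%MS.
Proof.
rewrite big_ord_recl big_ord1 /= expr0 mulmx1 expr1.
apply/andP; split; first exact: submx1.
have Nb : N (pos i) (sb i) = SS i *m AA i + (- lam (pos i)) *: SS i.
  by rewrite SA scaleNr addrC addKr.
rewrite -(Nanti (pos i) (sb i)); apply: addmx_sub; first exact: addsmxSl.
apply: submx_trans (submxMl _ _) _.
rewrite Nb; apply: addmx_sub; first exact: addsmxSr.
by apply: scalemx_sub; apply: addsmxSl.
Qed.

Lemma invar i j : i != j -> (SS i *m AA j == SS i)%MS.
Proof.
move=> ij.
have [pq|pq] := eqVneq (pos i) (pos j).
  have sbj : sb j = ~~ sb i.
    case: (sb i) (sb j) (pos_sb_inj pq) ij => -[] // /(_ erefl) ->; by rewrite eqxx.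
  rewrite /AA -pq sbj mulmxDr mul_mx_scalar /SS -mulmxA Nsq mulmx0 addr0.
  apply/eqmxP; exact: eqmx_scale.
have comm : SS i *m AA j = AA j *m SS i.
  rewrite /AA /SS mulmxDr mulmxDl scalar_mxC; congr (_ + _).
  by rewrite -mulmxA Ncomm // mulmxA Ncomm // -mulmxA.
apply/andP; split; first by rewrite comm submxMl.
rewrite -{1}(mulKmx (AA_unit j) (SS i)) -comm; exact: submxMl.
Qed.

Lemma two_block (P Q : 'M[F]_n.+1) (X : 'I_2 -> 'I_2 -> 'M[F]_n.+1) : P - Q \in unitmx ->
  ((X ord0 ord0 = 1%:M /\ X ord0 ord_max = P /\ X ord_max ord0 = 1%:M /\ X ord_max ord_max = Q)
   \/ (X ord0 ord0 = P /\ X ord0 ord_max = 1%:M /\ X ord_max ord0 = Q /\ X ord_max ord_max = 1%:M))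
  -> \mxblock_(a < 2, b < 2) X a b \in unitmx.
Proof.
move=> Du HX.
pose Di := invmx (P - Q).
have QDP : Q *m Di *m P = Q + Q *m Di *m Q.
  have -> : P = (P - Q) + Q by rewrite subrK.
  by rewrite mulmxDr -(mulmxA Q Di) mulVmx // mulmx1.
have DP : Di *m P + (- Di) *m Q = 1%:M by rewrite mulNmx -mulmxBr mulVmx.
have E1 : - (Q *m Di) *m P + (1%:M + Q *m Di) *m Q = 0.
  by rewrite mulNmx QDP mulmxDl mul1mx addNr.
have E2 : - (Q *m Di) *m 1%:M + (1%:M + Q *m Di) *m 1%:M = 1%:M.
  by rewrite !mulmx1 addrC addrK.
have E3 : Di *m 1%:M + (- Di) *m 1%:M = 0 by rewrite !mulmx1 addrN.
case: HX => [[h00 [h01 [h10 h11]]]|[h00 [h01 [h10 h11]]]].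
  apply: (blk_unit (Y := fun a k => if a == ord0 then (if k == ord0 then - (Q *m Di) else 1%:M + Q *m Di)
     else (if k == ord0 then Di else - Di))) => a k.
  rewrite sum_ord2; case: (ord2_cases a) => ->; case: (ord2_cases k) => ->;
    by rewrite /= ?h00 ?h01 ?h10 ?h11.
apply: (blk_unit (Y := fun a k => if a == ord0 then (if k == ord0 then Di else - Di)
     else (if k == ord0 then - (Q *m Di) else 1%:M + Q *m Di))) => a k.
rewrite sum_ord2; case: (ord2_cases a) => ->; case: (ord2_cases k) => ->;
  by rewrite /= ?h00 ?h01 ?h10 ?h11.
Qed.

Lemma nonsing t (f : 'I_t -> 'I_(2 * m)) (g : 'I_t -> 'I_2) :
  injective f -> injective g -> block_submx AA f g \in unitmx.
Proof.
move=> fi gi; have := leq_card g gi; rewrite !card_ord => tle.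
rewrite /block_submx.
case: t f g fi gi tle => [|[|[|t]]] f g fi gi tle.
- by apply: (blk_unit (Y := fun _ _ => 0)) => -[].
- apply: (blk_unit (Y := fun _ _ => invmx (AA (f ord0) ^+ g ord0))) => a k.
  rewrite big_ord1 (ord1 a) (ord1 k) eqxx mulVmx //.
  exact: (unitrX _ (AA_unit _)).
- have fne : f ord0 != f ord_max by apply/eqP => /fi /(congr1 val).
  have gne : g ord0 != g ord_max by apply/eqP => /gi /(congr1 val).
  apply: (two_block (P := AA (f ord0)) (Q := AA (f ord_max))); first exact: diff_unit.
  case: (ord2_cases (g ord0)) => g0; case: (ord2_cases (g ord_max)) => g1;
    rewrite g0 g1 ?eqxx // in gne *; rewrite /= expr0 expr1; [left|right]; do !split.
- by [].
Qed.

Lemma abstract_main : (2 %| n.+1)%N ->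
  exists A S : 'I_(2 * m) -> 'M[F]_n.+1, subspace_condition 2 A S.
Proof.
move=> h2; exists AA, SS; split => //; split; first exact: AA_unit.
split; first by move=> i; rewrite /SS rankP.
split; first exact: indep.
split; first exact: invar.
exact: nonsing.
Qed.
End Abstract.

Theorem theorem4p9 (m : nat) (F : finFieldType) :
  (0 < m)%N -> (m.+1 <= #|F|)%N ->
  exists (A : 'I_(2 * m) -> 'M[F]_(2 ^ m)) (S : 'I_(2 * m) -> 'M[F]_(2 ^ m)),
    subspace_condition 2 A S.
Proof.
move=> m0 qm.
have [n En] : exists n, (2 ^ m)%N = n.+1 by exists (2 ^ m).-1; rewrite prednK // expn_gt0.
have d2 : (2 %| n.+1)%N by rewrite -En; apply: dvdn_exp m0 (dvdnn 2).
rewrite En.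
have hc : #|BT m| = n.+1 by rewrite card_ffun card_bool card_ord En.
pose e (i : 'I_n.+1) : BT m := enum_val (cast_ord (esym hc) i).
pose e' (t : BT m) : 'I_n.+1 := cast_ord hc (enum_rank t).
have ee' : cancel e e' by move=> i; rewrite /e /e' enum_valK cast_ordKV.
have e'e : cancel e' e by move=> t; rewrite /e /e' cast_ordK enum_rankK.
pose s := enum [pred x : F | x != 0].
have ss : (m <= size s)%N.
  by rewrite /s -cardE cardC1; move: qm; case: #|F|.
pose lam (p : 'I_m) : F := nth 0 s p.
have lam_inj : injective lam.
  move=> p q /eqP; rewrite /lam nth_uniq ?enum_uniq //; last exact: leq_trans (ltn_ord _) ss.
  - by move/eqP/val_inj.
  - exact: leq_trans (ltn_ord _) ss.
have lam0 p : lam p != 0.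
  have := mem_nth (0 : F) (leq_trans (ltn_ord p) ss).
  by rewrite /lam mem_enum.
exact: (abstract_main lam_inj lam0 (NN_sq F ee' e'e) (NN_anti F ee' e'e) (NN_comm F ee' e'e) d2).
Qed.
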